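(* Let $d\ge2$, $p\ge1$, $k\ge1$. For each integer $m\ge1$, the function $$J_m(T):=N_{\ge m(p-1)+1}(T)\prod_{i=1}^{m-1}N_{\le i(p-1)}(T),\qquad T\in\mathcal{C}_k^{(d)},$$ lies in $\mathrm{span}\{\mathbf{1}_{\mathcal{S}}:\mathcal{S}\text{ a length-}p\text{ shuffle class in }\mathcal{C}_k^{(d)}\}$.
   Context: A $d$-Catalan tree is a rooted planar tree in which each vertex has $0$ or $d$ children; $\mathcal{C}_k^{(d)}$ is the set of those with $k$ internal vertices. $N_j(T)$ is the number of vertices at distance $j$ from the root, $N_{\le q}(T)=\sum_{0\le j\le q}N_j(T)$, $N_{\ge q}(T)=\sum_{j\ge q}N_j(T)$. For a path $(v_0,\dots,v_p)$ ($v_i$ a child of $v_{i-1}$) in $T$, $\mathrm{Sh}(T;v_0,\dots,v_p)$ is the set of trees obtained from $T$ by rearranging the $(d-1)p$ subtrees subtended by the siblings of $v_1,\dots,v_p$ among those positions; such sets are the length-$p$ shuffle classes. *)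

(* Defs.v *)
From HB Require Import structures.
From mathcomp Require Import all_boot all_order all_algebra.
From mathcomp Require Import boolp.
Set Implicit Arguments. Unset Strict Implicit. Unset Printing Implicit Defensive.
Import GRing.Theory.

(* Rooted planar trees: a vertex is the ordered list of its subtrees. *)
Inductive tree := Node of seq tree.
Definition leaf := Node [::].
Definition children (t : tree) := let: Node s := t in s.

Fixpoint tree_enc (t : tree) : GenTree.tree unit :=
  let: Node s := t in GenTree.Node 0 (map tree_enc s).
Fixpoint tree_dec (g : GenTree.tree unit) : tree :=
  match g with
  | GenTree.Leaf _ => leaf
  | GenTree.Node _ s => Node (map tree_dec s)
  end.
Lemma tree_encK : cancel tree_enc tree_dec.
Proof.
rewrite /cancel; fix IH 1; move=> [s] /=; congr Node.
elim: s => [|t s IHs] //=; by rewrite IH IHs.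
Qed.
HB.instance Definition _ := Countable.copy tree (can_type tree_encK).

Fixpoint is_dcat (d : nat) (t : tree) : bool :=
  let: Node s := t in ((size s == 0) || (size s == d)) && all (is_dcat d) s.
Fixpoint ninternal (t : tree) : nat :=
  let: Node s := t in (size s != 0) + sumn (map ninternal s).
Definition catalan (d k : nat) (t : tree) : bool := is_dcat d t && (ninternal t == k).

Fixpoint level (t : tree) (j : nat) : nat :=
  match t, j with
  | Node _, 0 => 1
  | Node s, j'.+1 => sumn (map (fun u => level u j') s)
  end.
Fixpoint height (t : tree) : nat :=
  let: Node s := t in if s is [::] then 0 else (foldr maxn 0 (map height s)).+1.
Definition Nle (t : tree) (q : nat) : nat := \sum_(0 <= j < q.+1) level t j.
(* levels beyond height t are empty, so this is sum_{j >= q} N_j(T) *)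
Definition Nge (t : tree) (q : nat) : nat := \sum_(q <= j < (height t).+1) level t j.

(* Vertices are addressed by words of child indices (0-based) from the root. *)
Fixpoint is_vertex (t : tree) (w : seq nat) : bool :=
  match w with
  | [::] => true
  | i :: w' => (i < size (children t)) && is_vertex (nth leaf (children t) i) w'
  end.
Fixpoint subtree (t : tree) (w : seq nat) : tree :=
  match w with
  | [::] => t
  | i :: w' => subtree (nth leaf (children t) i) w'
  end.
Fixpoint replace_at (t : tree) (w : seq nat) (u : tree) : tree :=
  match w with
  | [::] => u
  | i :: w' => Node (set_nth leaf (children t) i
                       (replace_at (nth leaf (children t) i) w' u))
  end.
Definition replace_all (t : tree) (pos : seq (seq nat)) (us : seq tree) : tree :=
  foldl (fun t' wu => replace_at t' wu.1 wu.2) t (zip pos us).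

(* A path (v_0,...,v_p) is given by the address a of v_0 and the child
   indices cs (size p), v_i = a ++ take i cs.  The positions of the siblings
   of v_1, ..., v_p : *)
Definition sib_positions (t : tree) (a cs : seq nat) : seq (seq nat) :=
  flatten [seq [seq (a ++ take i cs) ++ [:: j]
               | j <- iota 0 (size (children (subtree t (a ++ take i cs))))
               & j != nth 0 cs i]
          | i <- iota 0 (size cs)].
Definition is_path (t : tree) (a cs : seq nat) : bool := is_vertex t (a ++ cs).

(* T' \in Sh(T; v_0,...,v_p): obtained from T by rearranging the subtrees
   subtended by the siblings of v_1..v_p among those positions. *)
Definition in_shuffle (t : tree) (a cs : seq nat) (t' : tree) : Prop :=
  exists us : seq tree,
    perm_eq us [seq subtree t w | w <- sib_positions t a cs] /\
    t' = replace_all t (sib_positions t a cs) us.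

Definition shuffle_ind (t : tree) (a cs : seq nat) (t' : tree) : rat :=
  (`[< in_shuffle t a cs t' >])%:R.

Definition Jm (p m : nat) (t : tree) : nat :=
  Nge t (m * (p - 1) + 1) * \prod_(1 <= i < m) Nle t (i * (p - 1)).

(* Main.v *)
Require Import Defs.
From HB Require Import structures.
From mathcomp Require Import all_boot all_order all_algebra.
From mathcomp Require Import boolp zify.
Import GRing.Theory Num.Theory.
Set Implicit Arguments. Unset Strict Implicit. Unset Printing Implicit Defensive.


Definition incomp (w v : seq nat) := ~~ prefix w v && ~~ prefix v w.

Lemma incompC w v : incomp w v = incomp v w.
Proof. by rewrite /incomp andbC. Qed.

Lemma subtree_replace_same t w u : subtree (replace_at t w u) w = u.
Proof.
elim: w t => [|i w IH] [s] //=.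
by rewrite nth_set_nth /= eqxx IH.
Qed.

Lemma subtree_replace_incomp t w v u : incomp w v ->
  subtree (replace_at t w u) v = subtree t v.
Proof.
elim: w t v => [|i w IH] [s] [|j v] //=; rewrite /incomp /= ?andbF //.
rewrite nth_set_nth /=; have [->|ne] := eqVneq j i.
  by rewrite ?eqxx /= => H; apply: IH.
by [].
Qed.

Lemma replace_at_same t w u u' :
  replace_at (replace_at t w u) w u' = replace_at t w u'.
Proof.
elim: w t => [|i w IH] [s] //=.
by rewrite set_set_nth eqxx nth_set_nth /= eqxx IH.
Qed.

Lemma replace_at_comm t w v u u' : incomp w v ->
  replace_at (replace_at t w u) v u' = replace_at (replace_at t v u') w u.
Proof.
elim: w t v => [|i w IH] [s] [|j v] //=; rewrite /incomp /= ?andbF //.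
rewrite !nth_set_nth /=.
have [<-|ne] := eqVneq j i.
  by rewrite ?eqxx /= => H; congr Node; rewrite [LHS]set_set_nth [RHS]set_set_nth eqxx IH.
by move=> _; congr Node; rewrite [LHS]set_set_nth eq_sym (negbTE ne).
Qed.

Lemma replace_at_notprefix t w v u : is_vertex t w -> ~~ prefix w v ->
  is_vertex (replace_at t w u) v = is_vertex t v /\
  size (children (subtree (replace_at t w u) v)) = size (children (subtree t v)).
Proof.
elim: w t v => [|i w IH] [s] [|j v] //=.
- by move=> /andP[lis _] _; rewrite size_set_nth (maxn_idPr lis).
- move=> /andP[lis vw]; rewrite size_set_nth (maxn_idPr lis) nth_set_nth /=.
  have [ji|ne] := eqVneq j i; last by [].
  subst j; move=> H.
  by have [-> ->] := IH _ v vw H.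
Qed.

Lemma level_replace_at t w u j : is_vertex t w -> j <= size w ->
  level (replace_at t w u) j = level t j.
Proof.
elim: w t j => [|i w IH] [s] [|j] //=; first by case: u.
move=> /andP[lis vw]; rewrite ltnS => jw.
congr sumn; apply: (@eq_from_nth _ 0).
  by rewrite !size_map size_set_nth (maxn_idPr lis).
move=> x; rewrite size_map size_set_nth (maxn_idPr lis) => xs.
rewrite !(nth_map leaf) ?size_set_nth ?(maxn_idPr lis) // nth_set_nth /=.
by case: eqP => [->|] //; apply: IH.
Qed.

Lemma replace_all_cons t w pos u us :
  replace_all t (w :: pos) (u :: us) = replace_all (replace_at t w u) pos us.
Proof. by []. Qed.

Lemma subtree_replace_all_incomp t pos us v : (forall x, x \in pos -> incomp x v) ->
  subtree (replace_all t pos us) v = subtree t v.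
Proof.
elim: pos t us => [|w pos IH] t [|u us] H //=.
rewrite replace_all_cons IH ?subtree_replace_incomp //.
- by apply: H; rewrite mem_head.
- by move=> x xp; apply: H; rewrite in_cons xp orbT.
Qed.

Lemma replace_all_vertex t pos us v : pairwise incomp pos -> all (is_vertex t) pos ->
  (forall x, x \in pos -> ~~ prefix x v) ->
  is_vertex (replace_all t pos us) v = is_vertex t v /\
  size (children (subtree (replace_all t pos us) v)) = size (children (subtree t v)).
Proof.
elim: pos t us => [|w pos IH] t [|u us] //=.
move=> /andP[wp pp] /andP[vw vp] H.
rewrite replace_all_cons.
have [<- <-] := @replace_at_notprefix t w v u vw (H w (mem_head _ _)).
apply: IH => //.
- apply/allP => x xp; have /andP[nwx _] := allP wp x xp.
  by have [-> _] := @replace_at_notprefix t w x u vw nwx; apply: (allP vp).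
- by move=> x xp; apply: H; rewrite in_cons xp orbT.
Qed.

Lemma level_replace_all t pos us j : pairwise incomp pos -> all (is_vertex t) pos ->
  (forall x, x \in pos -> j <= size x) -> level (replace_all t pos us) j = level t j.
Proof.
elim: pos t us => [|w pos IH] t [|u us] //=.
move=> /andP[wp pp] /andP[vw vp] H.
rewrite replace_all_cons IH //.
- by rewrite level_replace_at // H // mem_head.
- apply/allP => x xp; have /andP[nwx _] := allP wp x xp.
  by have [-> _] := @replace_at_notprefix t w x u vw nwx; apply: (allP vp).
- by move=> x xp; apply: H; rewrite in_cons xp orbT.
Qed.

Lemma subtree_replace_all_nth t pos us k : pairwise incomp pos ->
  size us = size pos -> k < size pos ->
  subtree (replace_all t pos us) (nth [::] pos k) = nth leaf us k.
Proof.
elim: pos t us k => [|w pos IH] t [|u us] [|k] //= /andP[wp pp] [su] ks.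
- rewrite replace_all_cons subtree_replace_all_incomp ?subtree_replace_same //.
  by move=> x xp; rewrite incompC; apply: (allP wp).
- by rewrite replace_all_cons; apply: IH.
Qed.

Lemma replace_all_at_comm t pos us w v : (forall x, x \in pos -> incomp w x) ->
  replace_at (replace_all t pos us) w v = replace_all (replace_at t w v) pos us.
Proof.
elim: pos t us => [|x pos IH] t [|u us] H //=.
rewrite !replace_all_cons IH; last by move=> y yp; apply: H; rewrite in_cons yp orbT.
by rewrite replace_at_comm // incompC H // mem_head.
Qed.

Lemma replace_all_twice t pos us vs : pairwise incomp pos ->
  size us = size pos -> size vs = size pos ->
  replace_all (replace_all t pos us) pos vs = replace_all t pos vs.
Proof.
elim: pos t us vs => [|w pos IH] t [|u us] [|v vs] //= /andP[wp pp] [su] [sv].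
rewrite !replace_all_cons replace_all_at_comm; last by move=> x xp; apply: (allP wp).
by rewrite replace_at_same IH.
Qed.

Lemma replace_at_self t w : is_vertex t w -> replace_at t w (subtree t w) = t.
Proof.
elim: w t => [|i w IH] [s] //= /andP[lis vw].
rewrite IH //; congr Node; apply: (@eq_from_nth _ leaf).
  by rewrite size_set_nth (maxn_idPr lis).
by move=> x _; rewrite nth_set_nth /=; case: eqP => // ->.
Qed.

Lemma replace_all_self t pos : all (is_vertex t) pos ->
  replace_all t pos (map (subtree t) pos) = t.
Proof.
elim: pos => [|w pos IH] //= /andP[vw vp].
by rewrite replace_all_cons replace_at_self // IH.
Qed.


Lemma is_vertex_cat t v v' :
  is_vertex t (v ++ v') = is_vertex t v && is_vertex (subtree t v) v'.
Proof. by elim: v t => [|i v IH] t //=; rewrite IH andbA. Qed.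

Lemma pairwise_flatten_map (S : eqType) (T : eqType) (r : rel T) (g : S -> seq T) s :
  (forall x, x \in s -> pairwise r (g x)) ->
  pairwise (fun x y => allrel r (g x) (g y)) s ->
  pairwise r (flatten (map g s)).
Proof.
elim: s => [|x s IH] //= H /andP[hx hs].
rewrite pairwise_cat H ?mem_head // IH //; last by move=> y ys; apply: H; rewrite in_cons ys orbT.
rewrite !andbT; apply/allrelP => u v ux /flattenP [sv /mapP [y ys ->] vy].
exact: (allrelP (allP hx y ys)).
Qed.

Lemma pairwise_iota m n : pairwise ltn (iota m n).
Proof. by rewrite -sorted_pairwise ?iota_ltn_sorted //; exact: ltn_trans. Qed.

Lemma take_split (cs : seq nat) i i' : i < i' -> i' <= size cs ->
  take i' cs = take i cs ++ nth 0 cs i :: drop i.+1 (take i' cs).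
Proof.
move=> ii ics.
rewrite -{1}(cat_take_drop i (take i' cs)) take_takel ?(ltnW ii) //.
rewrite (drop_nth 0) ?nth_take //.
by rewrite size_take; case: ifP => _ //; apply: leq_trans ics.
Qed.

Lemma pcat (b s s' : seq nat) : prefix (b ++ s) (b ++ s') = prefix s s'.
Proof. by rewrite prefix_catr // eqxx. Qed.

Lemma pairwise_iota_in (r : rel nat) n : (forall i j, i < j < n -> r i j) ->
  pairwise r (iota 0 n).
Proof.
move=> H; apply/(pairwiseP 0) => i j; rewrite !inE size_iota => ilt jlt ij.
by rewrite !nth_iota // !add0n; apply: H; rewrite ij.
Qed.

Section Sib.
Variables (t : tree) (a cs : seq nat).
Hypothesis hp : is_path t a cs.

Lemma mem_sib x : x \in sib_positions t a cs -> exists i j,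
  [/\ i < size cs, j < size (children (subtree t (a ++ take i cs))), j != nth 0 cs i
    & x = (a ++ take i cs) ++ [:: j]].
Proof.
move=> /flattenP [sx /mapP [i ii ->]] /mapP [j]; rewrite mem_filter mem_iota /= add0n.
move=> /andP[jne jl] ->; exists i, j; split => //.
by move: ii; rewrite mem_iota add0n.
Qed.

Lemma vertex_b i : is_vertex t (a ++ take i cs).
Proof.
have := hp; rewrite /is_path -{1}(cat_take_drop i cs) catA is_vertex_cat.
by case/andP.
Qed.

Lemma sib_vertex : all (is_vertex t) (sib_positions t a cs).
Proof.
apply/allP => x /mem_sib [i [j [ii jl jne ->]]].
by rewrite is_vertex_cat vertex_b /= jl.
Qed.

Lemma sib_size x : x \in sib_positions t a cs -> (size a).+1 <= size x.
Proof.
move=> /mem_sib [i [j [ii jl jne ->]]].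
by rewrite !size_cat /= addn1 ltnS leq_addr.
Qed.

Lemma sib_notprefix i' x : i' <= size cs -> x \in sib_positions t a cs ->
  ~~ prefix x (a ++ take i' cs).
Proof.
move=> ics /mem_sib [i [j [ii jl jne ->]]].
case: (leqP i' i) => hi.
  apply/negP => /size_prefix; rewrite !size_cat /= !size_take.
  by rewrite ii; case: ltnP => h; lia.
rewrite (take_split hi ics) catA prefix_catr //=.
by rewrite eqxx /= (negbTE jne).
Qed.

Lemma sib_pairwise : pairwise incomp (sib_positions t a cs).
Proof.
apply: pairwise_flatten_map.
  move=> i _; rewrite pairwise_map; apply: pairwise_filter.
  apply: sub_pairwise (pairwise_iota _ _) => j j' jj'.
  rewrite /relpre /incomp /= !pcat /= !andbT.
  by rewrite (ltn_eqF jj') (gtn_eqF jj').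
apply: pairwise_iota_in => i i' /andP[ii' i'cs].
apply/allrelP => x y /mapP [j]; rewrite mem_filter => /andP[jne _] -> /mapP [j' _ ->].
rewrite (take_split ii' (ltnW i'cs)) /incomp -!catA /= !pcat /= (negbTE jne) /=.

by rewrite eq_sym (negbTE jne).
Qed.

End Sib.

Lemma shuffle_refl t a cs : is_path t a cs -> in_shuffle t a cs t.
Proof.
move=> hp; exists (map (subtree t) (sib_positions t a cs)); split => //.
by rewrite replace_all_self // (@sib_vertex t a cs hp).
Qed.

Lemma shuffle_main t a cs t' : is_path t a cs -> in_shuffle t a cs t' ->
  [/\ is_path t' a cs,
      (forall t'', in_shuffle t' a cs t'' <-> in_shuffle t a cs t'') &
      (forall j, j <= (size a).+1 -> level t' j = level t j)].
Proof.
move=> hp [us [pus ->]].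
set pos := sib_positions t a cs.
have F1 := @sib_pairwise t a cs; have F2 := @sib_vertex t a cs hp.
have sus : size us = size pos by rewrite (perm_size pus) size_map.
have node i : i <= size cs ->
    is_vertex (replace_all t pos us) (a ++ take i cs) = is_vertex t (a ++ take i cs) /\
    size (children (subtree (replace_all t pos us) (a ++ take i cs))) =
    size (children (subtree t (a ++ take i cs))).
  by move=> ics; apply: replace_all_vertex => // x xp; exact: (@sib_notprefix t a cs).
have sibeq : sib_positions (replace_all t pos us) a cs = pos.
  rewrite /pos /sib_positions; congr flatten; apply/eq_in_map => i.
  rewrite mem_iota add0n => ics.
  by have [_ ->] := node i (ltnW ics).
have mapeq : map (subtree (replace_all t pos us)) pos = us.
  apply: (@eq_from_nth _ leaf); first by rewrite size_map sus.
  move=> k; rewrite size_map => ks.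
  by rewrite (nth_map [::]) // subtree_replace_all_nth.
split.
- have [e _] := node (size cs) (leqnn _).
  by move: hp; rewrite /is_path take_size in e *; rewrite e.
- move=> t''; rewrite /in_shuffle sibeq mapeq; split.
    move=> [vs [pvs ->]]; exists vs; split; first exact: perm_trans pvs pus.
    by rewrite replace_all_twice // (perm_size pvs).
  move=> [vs [pvs ->]]; exists vs; split.
    by apply: perm_trans pvs _; rewrite perm_sym.
  by rewrite replace_all_twice // (perm_size pvs) size_map.
- move=> j ja; apply: level_replace_all => // x xp.
  exact: leq_trans ja (@sib_size t a cs x xp).
Qed.


Fixpoint words (d q : nat) : seq (seq nat) :=
  if q is q'.+1 then [seq i :: w | i <- index_iota 0 d, w <- words d q'] else [:: [::]].

Lemma size_words d q w : w \in words d q -> size w = q.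
Proof.
elim: q w => [|q IH] w /=; first by rewrite inE => /eqP ->.
by move=> /allpairsPdep [i [w' [_ w'q ->]]] /=; rewrite (IH _ w'q).
Qed.

Lemma level_words d t q : is_dcat d t ->
  level t q = \sum_(w <- words d q) (is_vertex t w : nat).
Proof.
elim: q t => [|q IH] [s] /=; first by rewrite big_seq1.
move=> /andP[sz alls].
rewrite big_allpairs_dep /=.
case/orP: sz => [/eqP/size0nil -> | /eqP sd].
  by rewrite big1 // => i _; rewrite big1.
have -> : index_iota 0 d = index_iota 0 (size s) by rewrite sd.
rewrite sumnE big_map (big_nth leaf) /=.
apply: eq_big_nat => i /andP[_ ilt].
rewrite ilt IH //; apply: (allP alls); exact: mem_nth.
Qed.

Lemma height_le_foldr s u : u \in s -> height u <= foldr maxn 0 (map height s).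
Proof.
elim: s => // y r IHr; rewrite in_cons => /orP[/eqP -> | ur] /=.
  exact: leq_maxl.
exact: leq_trans (IHr ur) (leq_maxr _ _).
Qed.

Lemma height_child s u : u \in s -> height u < height (Node s).
Proof.
by case: s => // x s us; move: (height_le_foldr us) => /= h; rewrite ltnS.
Qed.

Lemma level_gt_height t j : height t < j -> level t j = 0.
Proof.
elim: j t => [|j IH] [s] //= H.
rewrite sumnE big_map big1_seq // => u /andP[_ us]; apply: IH.
by rewrite -ltnS; apply: leq_trans (height_child us) H.
Qed.

Lemma leq_sum_mem (s : seq tree) f u : u \in s -> f u <= \sum_(v <- s) f v.
Proof. by move=> us; rewrite (big_rem u) //= leq_addr. Qed.

Lemma foldr_max_le (s : seq tree) B :
  (forall u, u \in s -> height u <= B) -> foldr maxn 0 (map height s) <= B.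
Proof.
elim: s => [|y r IHr] hb //=.
rewrite geq_max hb ?mem_head //= IHr // => u ur; apply: hb; by rewrite in_cons ur orbT.
Qed.

Lemma height_ninternal n t : height t <= n -> height t <= ninternal t.
Proof.
elim: n t => [|n IH] [s].
  by case: s.
case: s => [|x s] // H.
have -> : ninternal (Node (x :: s)) = (sumn (map ninternal (x :: s))).+1 by [].
have -> : height (Node (x :: s)) = (foldr maxn 0 (map height (x :: s))).+1 by [].
rewrite ltnS; apply: foldr_max_le => u us.
apply: leq_trans (IH u _) _.
  by rewrite -ltnS; apply: leq_trans (height_child us) H.
by rewrite sumnE big_map; apply: leq_sum_mem.
Qed.


Fixpoint tuples (l : nat) (X : seq tree) : seq (seq tree) :=
  if l is l'.+1 then [seq x :: s | x <- X, s <- tuples l' X] else [:: [::]].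
Fixpoint gen (d n : nat) : seq tree :=
  if n is n'.+1 then leaf :: [seq Node s | s <- tuples d (gen d n')] else [:: leaf].

Lemma mem_tuples l X s : size s = l -> all (mem X) s -> s \in tuples l X.
Proof.
elim: l s => [|l IH] [|x s] //= [sz] /andP[xX sX].
by apply/allpairsPdep; exists x, s; split => //; apply: IH.
Qed.

Lemma mem_gen d n t : is_dcat d t -> height t <= n -> t \in gen d n.
Proof.
elim: n t => [|n IH] [s] dc hs.
  by case: s dc hs => // _ _; exact: mem_head.
case: s dc hs => [|x s] dc hs; first exact: mem_head.
rewrite in_cons; apply/orP; right; apply: map_f.
move: dc => /andP[sz al].
apply: mem_tuples; first by apply/eqP.
apply/allP => u us; apply: IH; first exact: (allP al).
by rewrite -ltnS; apply: leq_trans (height_child us) hs.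
Qed.

Definition Lc d k := [seq T <- gen d k | catalan d k T].

Lemma mem_Lc d k T : (T \in Lc d k) = catalan d k T.
Proof.
rewrite mem_filter; case c: (catalan d k T) => //=.
case/andP: c => dc /eqP nk; apply: mem_gen => //.
by rewrite -nk; apply: (@height_ninternal (height T)).
Qed.

Definition hv p m T := \prod_(1 <= i < m) Nle T (i * (p - 1)).
Definition nn d k p q w T :=
  count (fun T1 => `[< in_shuffle T (take (q - p) w) (drop (q - p) w) T1 >]) (Lc d k).

Lemma hv_inv p m (a : seq nat) t t' :
  (forall j, j <= (size a).+1 -> level t' j = level t j) ->
  (m - 1) * (p - 1) <= size a -> hv p m t' = hv p m t.
Proof.
move=> H ha; apply: eq_big_nat => i /andP[_ im]; rewrite /Nle.
apply: eq_big_nat => j /andP[_ ji]; apply: H.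
have : i * (p - 1) <= (m - 1) * (p - 1) by apply: leq_mul => //; lia.
lia.
Qed.

Local Open Scope ring_scope.

Lemma sum_if_const (L : seq tree) (b : pred tree) (c : rat) :
  \sum_(x <- L) (if b x then c else 0) = (count b L)%:R * c.
Proof.
elim: L => [|x L IH]; first by rewrite big_nil mul0r.
rewrite big_cons IH /=; case: (b x); rewrite ?add0n ?add0r //.
by rewrite natrD mulrDl mul1r.
Qed.

Lemma per_qw d k p m q w T : (1 <= p)%N -> (m * (p - 1) + 1 <= q)%N -> size w = q ->
  catalan d k T ->
  \sum_(T0 <- Lc d k) (if is_vertex T0 w then
      (hv p m T0)%:R / (nn d k p q w T0)%:R *
        shuffle_ind T0 (take (q - p) w) (drop (q - p) w) T else 0)
  = ((is_vertex T w) * hv p m T)%N%:R :> rat.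
Proof.
move=> p1 qD sw cT.
rewrite /nn; set a := take (q - p) w; set cs := drop (q - p) w.
have ew : a ++ cs = w by rewrite cat_take_drop.
have sa : size a = (q - p)%N by rewrite size_take; case: ltnP; lia.
have ha : ((m - 1) * (p - 1) <= size a)%N.
  rewrite sa; case: m qD => [|m'] qD; first by rewrite mul0n.
  move: qD; rewrite mulSn subSS subn0; lia.
have path_eq t : is_path t a cs = is_vertex t w by rewrite /is_path ew.
case vT: (is_vertex T w).
- have pT : is_path T a cs by rewrite path_eq.
  transitivity (\sum_(T0 <- Lc d k) (if `[< in_shuffle T a cs T0 >] then
     (hv p m T)%:R / (count (fun T1 => `[< in_shuffle T a cs T1 >]) (Lc d k))%:R
     else 0) : rat).
    apply: eq_big_seq => T0 T0L.
    case: (asboolP (in_shuffle T a cs T0)) => H.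
      have [pT0 eqv lv] := shuffle_main pT H.
      rewrite -path_eq pT0.
      have -> : shuffle_ind T0 a cs T = 1.
        by rewrite /shuffle_ind asboolT //; apply/eqv; apply: shuffle_refl.
      rewrite mulr1 (hv_inv lv ha); congr (_ / _%:R).
      apply: eq_count => T1; apply/idP/idP => /asboolP X; apply/asboolP; by apply/eqv.
    case vT0: (is_vertex T0 w) => //.
    have pT0 : is_path T0 a cs by rewrite path_eq.
    rewrite /shuffle_ind asboolF /= ?mulr0n ?mulr0 // => H2; apply: H.
    have [_ eqv _] := shuffle_main pT0 H2.
    by apply/eqv; apply: shuffle_refl.
  rewrite sum_if_const /= mul1n mulrCA mulfV ?mulr1 //.
  rewrite pnatr_eq0 -lt0n -has_count; apply/hasP; exists T; first by rewrite mem_Lc.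
  by apply/asboolP; apply: shuffle_refl.
- rewrite mul0n big1_seq // => T0 /andP[_ T0L]; case vT0: (is_vertex T0 w) => //.
  have pT0 : is_path T0 a cs by rewrite path_eq.
  rewrite /shuffle_ind asboolF /= ?mulr0n ?mulr0 // => H2.
  have [pT _ _] := shuffle_main pT0 H2.
  by rewrite path_eq vT in pT.
Qed.

Lemma sum_tail (f : nat -> nat) D n1 n2 : (n1 <= n2)%N -> (forall j, (n1 <= j)%N -> f j = 0%N) ->
  (\sum_(D <= j < n2) f j = \sum_(D <= j < n1) f j)%N.
Proof.
move=> n12 H; case: (leqP D n1) => Dn.
  rewrite (@big_cat_nat _ _ _ n1) //= [X in (_ + X)%N]big1_seq ?addn0 // => j.
  by rewrite mem_index_iota => /andP[_ /andP[h _]]; apply: H.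
rewrite [RHS]big_geq ?(ltnW Dn) // big1_seq // => j.
by rewrite mem_index_iota => /andP[_ /andP[h _]]; apply: H; apply: leq_trans h; apply: ltnW.
Qed.

Unset Implicit Arguments.

Theorem corollary6p3 (d p k m : nat) :
  (2 <= d)%N -> (1 <= p)%N -> (1 <= k)%N -> (1 <= m)%N ->
  exists cls : seq (rat * (tree * (seq nat * seq nat))),
    (forall c, c \in cls ->
       [/\ catalan d k c.2.1, is_path c.2.1 c.2.2.1 c.2.2.2
         & size c.2.2.2 = p]) /\
    (forall T : tree, catalan d k T ->
       (Jm p m T)%:R = \sum_(c <- cls) c.1 * shuffle_ind c.2.1 c.2.2.1 c.2.2.2 T).
Proof.
move=> d2 p1 k1 m1.
set D := (m * (p - 1) + 1)%N.
have pD : (p <= D)%N by rewrite /D; case: (m) m1 => // m' _; rewrite mulSn; lia.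
exists (flatten [seq flatten [seq [seq ((hv p m T0)%:R / (nn d k p q w T0)%:R,
           (T0, (take (q - p) w, drop (q - p) w))) | w <- [seq w <- words d q | is_vertex T0 w]]
         | q <- index_iota D k.+1] | T0 <- Lc d k]).
split.
  move=> c /flattenP [s1 /mapP [T0 T0L ->]] /flattenP [s2 /mapP [q qI ->]] /mapP [w].
  rewrite mem_filter => /andP[vw wq] -> /=; split.
  - by rewrite -mem_Lc.
  - by rewrite /is_path cat_take_drop.
  - rewrite size_drop (size_words wq); move: qI; rewrite mem_index_iota; lia.
move=> T cT.
rewrite big_flatten big_map /=.
under eq_bigr => T0 _ do rewrite big_flatten big_map /=.
under eq_bigr => T0 _ do under eq_bigr => q _ do rewrite big_map big_filter big_mkcond /=.
rewrite exchange_big /=.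
under eq_bigr => q _ do rewrite exchange_big /=.
rewrite big_seq; under eq_bigr => q qI.
  rewrite big_seq; under eq_bigr => w wq.
    rewrite (@per_qw d k p m q w T) //; last exact: size_words wq.
    - over.
    - by move: qI; rewrite mem_index_iota /D => /andP[].
  over.
rewrite /= -big_seq.
under eq_bigr => q _ do rewrite -big_seq -natr_sum.
rewrite -natr_sum; congr (_%:R).
under eq_bigr => q _ do rewrite -big_distrl /= -(level_words q (andP cT).1).
rewrite -big_distrl /= /Jm; congr (_ * _)%N.
rewrite /Nge (@sum_tail _ _ (height T).+1) //.
- apply: leq_trans (@height_ninternal (height T) T (leqnn _)) _.
  by case/andP: cT => _ /eqP ->.
- by move=> j hj; apply: level_gt_height.
Qed.
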